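(* For every (finite, simple, undirected) graph $G$ with at least two vertices, $\kappa_2(\overleftrightarrow{G})=\kappa(G)$.
   Context: $\overleftrightarrow{G}$ denotes the complete biorientation of $G$: the digraph with vertex set $V(G)$ obtained by replacing each edge $xy$ of $G$ by the two arcs $xy$ and $yx$. For distinct vertices $x,y$ of $G$, $\kappa_{\{x,y\}}(G)$ is the maximum number of internally disjoint $x$–$y$ paths in $G$, and $\kappa(G)=\min\{\kappa_{\{x,y\}}(G): x,y\in V(G), x\ne y\}$ (so $\kappa(G)=0$ if $G$ is disconnected). A digraph is strong if for every ordered pair of vertices $u,v$ there is a directed path from $u$ to $v$. For a digraph $D$ and $S\subseteq V(D)$, strong subgraphs $D_1,\dots,D_p$ each containing $S$ are $S$-internally disjoint if $V(D_i)\cap V(D_j)=S$ and $A(D_i)\cap A(D_j)=\emptyset$ for $i<j$; $\kappa_S(D)$ is the maximum number of such subgraphs, and $\kappa_2(D)=\min\{\kappa_S(D): S\subseteq V(D), |S|=2\}$. *)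

(* Defs.v *)
From mathcomp Require Import all_boot.
From mathcomp Require Import boolp.
Set Implicit Arguments.
Unset Strict Implicit.
Unset Printing Implicit Defensive.

Section Defs.
Variable T : finType.

(* A finite simple undirected graph on vertex set T is given by a symmetric,
   irreflexive adjacency relation [g]; a digraph on T by its arc relation. *)

(* Complete biorientation: arcs xy and yx for every edge xy of G.  As an arc
   relation, it is exactly the adjacency relation of G. *)
Definition biorient (g : rel T) : rel T := fun u v => g u v.

Definition is_xy_path (g : rel T) (x y : T) (p : seq T) : bool :=
  [&& uniq (x :: p), path g x p & last x p == y].

Definition has_int_disj_paths (g : rel T) (x y : T) (k : nat) : Prop :=
  exists P : 'I_k -> seq T,
    injective P /\
    (forall i, is_xy_path g x y (P i)) /\
    (forall i j, i != j -> forall v, v \in P i -> v \in P j -> v = y).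

(* The search bound #|T| is harmless: every such path either is the edge xy
   or has its own internal vertex, so there are at most #|T| - 1 of them. *)
Definition kappa_xy (g : rel T) (x y : T) : nat :=
  \max_(k < #|T|.+1 | `[< has_int_disj_paths g x y k >]) (k : nat).

(* kappa(G) = min over distinct x, y (the neutral element #|T| is an upper
   bound of all kappa_xy, so it never affects the minimum when #|T| >= 2). *)
Definition kappa (g : rel T) : nat :=
  \big[minn/#|T|]_(x : T) \big[minn/#|T|]_(y : T | y != x) kappa_xy g x y.

Definition subdigraph (D : rel T) (H : {set T} * {set T * T}) : bool :=
  [forall a in H.2, [&& D a.1 a.2, a.1 \in H.1 & a.2 \in H.1]].

Definition strong_sub (H : {set T} * {set T * T}) : bool :=
  [forall u in H.1, forall v in H.1,
     connect (fun a b => (a, b) \in H.2) u v].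

Definition has_S_int_disj (D : rel T) (S : {set T}) (k : nat) : Prop :=
  exists F : 'I_k -> {set T} * {set T * T},
    (forall i, [&& subdigraph D (F i), strong_sub (F i) & S \subset (F i).1]) /\
    (forall i j, i != j ->
       (F i).1 :&: (F j).1 = S /\ (F i).2 :&: (F j).2 = set0).

(* Bound #|T| is harmless for |S| = 2: each such subgraph contains an arc
   leaving a fixed vertex of S, and these arcs are pairwise distinct. *)
Definition kappa_S (D : rel T) (S : {set T}) : nat :=
  \max_(k < #|T|.+1 | `[< has_S_int_disj D S k >]) (k : nat).

Definition kappa2 (D : rel T) : nat :=
  \big[minn/#|T|]_(S : {set T} | #|S| == 2) kappa_S D S.

End Defs.

(* Main.v *)
Require Import Defs.
From mathcomp Require Import all_boot.
From mathcomp Require Import boolp.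
Set Implicit Arguments.
Unset Strict Implicit.
Unset Printing Implicit Defensive.

Section Aux.
Variable T : finType.

Lemma path_connect2 (e : rel T) a p :
  path (fun u w => e u w && e w u) a p ->
  forall v, v \in a :: p -> connect e a v && connect e v a.
Proof.
elim: p a => [|b p IH] a /=.
  by move=> _ v; rewrite inE => /eqP ->; rewrite connect0.
case/andP=> /andP[eab eba] hp v; rewrite inE => /orP[/eqP ->|hv].
  by rewrite connect0.
case/andP: (IH b hp v hv) => h1 h2.
apply/andP; split.
  exact: connect_trans (connect1 eab) h1.
exact: connect_trans h2 (connect1 eba).
Qed.

Lemma path_sub_all (e : rel T) (V : pred T) a p :
  (forall u w, e u w -> V w) -> path e a p -> all V p.
Proof.
move=> hV; elim: p a => [|b p IH] a //= /andP[eab hp].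
by rewrite (hV _ _ eab) (IH b hp).
Qed.

Lemma last_uniq_nil (y : T) q : last y q = y -> uniq (y :: q) -> q = [::].
Proof.
case/lastP: q => [//|q z]; rewrite last_rcons => -> /=.
by rewrite mem_rcons mem_head.
Qed.

End Aux.

Section A.
Variable T : finType.
Variable g : rel T.
Hypothesis g_sym : symmetric g.
Hypothesis g_irr : irreflexive g.
Variables x y : T.
Hypothesis xy : x != y.

Lemma lemA k : has_int_disj_paths g x y k -> has_S_int_disj (biorient g) [set x; y] k.
Proof.
case=> P [Pinj [Ppath Pdisj]]; move: Ppath; rewrite /is_xy_path => Ppath.
pose V i := x |: [set v in P i].
pose S := [set x; y].
pose A i := if P i == [:: y] then [set (x,y); (y,x)] else
  [set a : T * T | [&& g a.1 a.2, a.1 \in V i, a.2 \in V i &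
                      ~~ ((a.1 \in S) && (a.2 \in S))]].
have memV i v : (v \in V i) = (v \in x :: P i) by rewrite !inE.
have yV i : y \in V i.
  have /and3P[_ _ /eqP Hl] := Ppath i; rewrite memV -{1}Hl mem_last //.
have xV i : x \in V i by rewrite memV mem_head.
have SV i : S \subset V i.
  by apply/subsetP => v; rewrite /S in_set2 => /orP[]/eqP->; [exact: xV|exact: yV].
have AV i a : a \in A i -> [/\ a.1 \in V i, a.2 \in V i & g a.1 a.2].
  rewrite /A; case: ifP => [/eqP Pi|_]; last by rewrite inE => /and4P[].
  have gxy : g x y by move: (Ppath i); rewrite Pi /= => /and3P[_ /andP[]].
  by rewrite in_set2 => /orP[]/eqP -> /=; split; rewrite ?xV ?yV // g_sym.
have AS i a : a \in A i -> a.1 \in S -> a.2 \in S -> P i = [:: y].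
  rewrite /A; case: ifP => [/eqP //|_]; rewrite inE => /and4P[_ _ _ /negP h] h1 h2.
  by case: h; rewrite h1 h2.
have VI i j : i != j -> V i :&: V j = S.
  move=> ij; apply/eqP; rewrite eqEsubset subsetI !SV !andbT.
  apply/subsetP => v; rewrite inE => /andP[]; rewrite !memV !inE.
  case/orP => [->//|vi] /orP[->//|vj].
  by rewrite (Pdisj i j ij v vi vj) eqxx orbT.
exists (fun i => (V i, A i)); split; last first.
  move=> i j ij /=; split; first exact: VI.
  apply/eqP; rewrite -subset0; apply/subsetP => a; rewrite inE => /andP[ai aj].
  have [a1i a2i _] := AV i a ai; have [a1j a2j _] := AV j a aj.
  have a1S : a.1 \in S by rewrite -(VI i j ij) inE a1i.
  have a2S : a.2 \in S by rewrite -(VI i j ij) inE a2i.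
  have := AS i a ai a1S a2S; rewrite -(AS j a aj a1S a2S) => /Pinj eij.
  by rewrite eij eqxx in ij.
move=> i; apply/and3P; split => /=.
- by apply/forallP => a; apply/implyP => /AV [h1 h2 h3]; rewrite /biorient h1 h2 h3.
- apply/forallP => u; apply/implyP => uV; apply/forallP => v; apply/implyP => vV.
  case: (eqVneq (P i) [:: y]) => Pi.
    have AE : A i = [set (x,y); (y,x)] by rewrite /A Pi eqxx.
    move: uV vV; rewrite !memV Pi !inE AE.
    case/orP => /eqP -> /orP[]/eqP ->; rewrite ?connect0 //; apply: connect1;
      by rewrite !inE eqxx ?orbT.
  have AE : A i = [set a : T * T | [&& g a.1 a.2, a.1 \in V i, a.2 \in V i &
                      ~~ ((a.1 \in S) && (a.2 \in S))]] by rewrite /A (negbTE Pi).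
  have inA a : (a \in A i) = [&& g a.1 a.2, a.1 \in V i, a.2 \in V i & ~~ ((a.1 \in S) && (a.2 \in S))] by rewrite AE in_set.
  have inS w : (w \in S) = (w == x) || (w == y) by rewrite in_set2.
  have /and3P[Pu Pp Pl] := Ppath i.
  have hp : path (fun u w => ((u, w) \in A i) && ((w, u) \in A i)) x (P i).
    move: Pu Pp Pl Pi; case Pe: (P i) => [|b q] /=; first by move=> _ _ /eqP yx; move: xy; rewrite yx eqxx.
    case/andP=> xbq ubq /andP[gxb pq] lq nq.
    have bx : b != x by apply: contraNneq xbq => ->; rewrite mem_head.
    have bS : b \notin S.
      rewrite inS negb_or bx /=; apply/negP => /eqP eb; subst b.
      by move: nq; rewrite (last_uniq_nil (eqP lq) ubq) eqxx.
    have bV : b \in V i by rewrite memV Pe !inE eqxx orbT.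
    rewrite !inA /= gxb g_sym gxb xV bV (negbTE bS) !andbF /=.
    apply: (sub_in_path (e := g) (P := [pred u | (u \in x :: b :: q) && (u != x)])).
      move=> c d /andP[cin cx] /andP[din dx] gcd.
      rewrite !inA /= gcd g_sym gcd !memV Pe cin din /= !inS.
      rewrite (negbTE cx) (negbTE dx) /=.
      by case: (c =P y) => [ce|]; case: (d =P y) => [de|] //=; rewrite ce de g_irr in gcd.
    apply/allP => c cin /=; rewrite inE cin orbT /=.
    by apply: contraNneq xbq => <-.
    exact: pq.
  have hc := path_connect2 hp.
  rewrite memV in uV; rewrite memV in vV.
  have /andP[_ ux] := hc u uV; have /andP[xv _] := hc v vV.
  apply: connect_trans ux xv.
- by rewrite SV.
Qed.
End A.

Section B.
Variable T : finType.
Variable g : rel T.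
Variables x y : T.
Hypothesis xy : x != y.

Lemma lemB k : has_S_int_disj (biorient g) [set x; y] k -> has_int_disj_paths g x y k.
Proof.
case=> F [Fp Fd].
have ex i : exists p, is_xy_path (fun a b => (a, b) \in (F i).2) x y p.
  have /and3P[_ st sub] := Fp i.
  have xF : x \in (F i).1 by apply: (subsetP sub); rewrite in_set2 eqxx.
  have yF : y \in (F i).1 by apply: (subsetP sub); rewrite in_set2 eqxx orbT.
  move/forallP: st => /(_ x) /implyP /(_ xF) /forallP /(_ y) /implyP /(_ yF).
  case/connectP => p pp ->; case: (shortenP pp) => p' pp' up' _.
  by exists p'; rewrite /is_xy_path up' pp' eqxx.
pose P i := xchoose (ex i).
have PP i : is_xy_path (fun a b => (a, b) \in (F i).2) x y (P i) := xchooseP (ex i).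
have arcF i a b : (a, b) \in (F i).2 -> [&& g a b, a \in (F i).1 & b \in (F i).1].
  have /and3P[sd _ _] := Fp i.
  by move=> h; move/forallP: sd => /(_ (a, b)) /implyP /(_ h).
have inF i : all (mem (F i).1) (P i).
  have /and3P[_ pp _] := PP i.
  by apply: path_sub_all pp => a b /arcF /and3P[].
exists P; split; last split.
- move=> i j e; apply/eqP; apply: contraT => ij.
  have /and3P[_ ppi li] := PP i; have /and3P[_ ppj _] := PP j.
  move: li ppi ppj; rewrite e; case: (P j) => [|b q] /=.
    by move=> /eqP yx; move: xy; rewrite yx eqxx.
  move=> _ /andP[h1 _] /andP[h2 _].
  have := (Fd i j ij).2; move/setP => /(_ (x, b)); rewrite inE h1 h2 inE.
  by [].
- move=> i; have /and3P[u pp l] := PP i.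
  rewrite /is_xy_path u l andbT /=.
  by apply: sub_path pp => a b /arcF /and3P[].
- move=> i j ij v vi vj.
  have vF : v \in (F i).1 :&: (F j).1.
    by rewrite inE; apply/andP; split; [exact: (allP (inF i) v vi)|exact: (allP (inF j) v vj)].
  rewrite (Fd i j ij).1 in_set2 in vF.
  case/orP: vF => /eqP // vx.
  have /and3P[u _ _] := PP i.
  by move: u => /= /andP[/negP []]; rewrite -vx.
Qed.
End B.

Section Main.
Variable T : finType.

Lemma bigmin_le (I : finType) (P : pred I) (F : I -> nat) idx i0 :
  P i0 -> \big[minn/idx]_(i | P i) F i <= F i0.
Proof.
move=> h; have : i0 \in index_enum I by rewrite mem_index_enum.
elim: (index_enum I) => [|a r IH] //; rewrite inE big_cons => /orP[/eqP <-|/IH h'].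
  by rewrite h geq_minl.
by case: (P a) => //; exact: leq_trans (geq_minr _ _) h'.
Qed.

Lemma le_bigmin (I : finType) (P : pred I) (F : I -> nat) idx m :
  m <= idx -> (forall i, P i -> m <= F i) -> m <= \big[minn/idx]_(i | P i) F i.
Proof.
move=> h1 h2; apply: (big_ind (fun v => m <= v)) => // a b ha hb.
by rewrite leq_min ha hb.
Qed.

End Main.

Theorem theorem2p5 (T : finType) (g : rel T)
  (g_sym : symmetric g) (g_irr : irreflexive g) (hT : 1 < #|T|) :
  kappa2 (biorient g) = kappa g.
Proof.
have kS x y : x != y -> kappa_S (biorient g) [set x; y] = kappa_xy g x y.
  move=> xy; rewrite /kappa_S /kappa_xy; apply: eq_bigl => k.
  by apply: asbool_equiv_eq; split; [exact: lemB | exact: lemA].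
have kxyT x y : kappa_xy g x y <= #|T|.
  by apply/bigmax_leqP => k _; rewrite -ltnS ltn_ord.
have [x0 [y0 [_ _ xy0]]] := card_gt1P hT.
have c2 x y : x != y -> #|[set x; y]| == 2 by move=> xy; rewrite cards2 xy.
have k2le x y : x != y -> kappa2 (biorient g) <= kappa_xy g x y.
  move=> xy; rewrite -(kS x y xy) /kappa2.
  by apply: bigmin_le; exact: c2.
have kle x y : x != y -> kappa g <= kappa_xy g x y.
  move=> xy; rewrite /kappa.
  apply: (@leq_trans (\big[minn/#|T|]_(y' | y' != x) kappa_xy g x y')).
    by apply: bigmin_le.
  by apply: bigmin_le; rewrite eq_sym.
apply/eqP; rewrite eqn_leq; apply/andP; split.
- rewrite /kappa; apply: le_bigmin => [|x _].
    exact: leq_trans (k2le x0 y0 xy0) (kxyT x0 y0).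
  apply: le_bigmin => [|y yx].
    exact: leq_trans (k2le x0 y0 xy0) (kxyT x0 y0).
  by apply: k2le; rewrite eq_sym.
- rewrite /kappa2; apply: le_bigmin => [|S /cards2P [x [y [xy ->]]]].
    exact: leq_trans (kle x0 y0 xy0) (kxyT x0 y0).
  by rewrite kS // kle.
Qed.
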